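(* Let $\sigma_a,\sigma_b$ be reasonable strategies of player $0$ in the escape arena $\mathcal{A}_\bot$ with $\sigma_a\subseteq\sigma_b$. Then $\mathcal{V}_{\sigma_a}\preceq\mathcal{V}_{\sigma_b}$, i.e. $\mathcal{V}_{\sigma_a}(s)\preceq\mathcal{V}_{\sigma_b}(s)$ for all vertices $s$.
   Context: Parity game arena: $\mathcal{A}=(V,E,o,c)$ with $V$ finite, $E\subseteq V\times V$, every vertex has a successor, owner map $o:V\to\{0,1\}$, colouring $c:V\to\{0,\dots,d-1\}$; $V_i=o^{-1}(i)$. An infinite vertex sequence is won by player $0$ iff the largest colour occurring infinitely often is even. A cycle is $i$-dominated if its largest colour has parity $i$. Escape arena $\mathcal{A}_\bot$: vertices $V\cup\{\bot\}$, edges $E\cup(V_0\times\{\bot\})$, $\bot$ owned by player $0$ with no outgoing edges. $E_0$ = edges of $\mathcal{A}_\bot$ leaving $V_0$, $E_1=E\cap(V_1\times V)$. A strategy of player $i$ is a set $\sigma\subseteq E_i$ with $s\sigma\neq\emptyset$ for all $s\in V_i$. $\mathcal{A}_\bot|_{\sigma,\tau}$ has edges $\sigma\cup\tau$, $\mathcal{A}_\bot|_\sigma$ has edges $\sigma\cup E_1$; plays are maximal paths. Colour profiles $\mathcal{P}=\mathbb{Z}^d\cup\{-\infty,\infty\}$, $\text{\o}$ zero vector; $\wp(s)$ unit vector at coordinate $c(s)$; for a finite path the sum over vertices in $V$; infinite play: $\infty$ if won by player $0$, else $-\infty$. Order $\prec$: $-\infty$ least, $\infty$ greatest; for distinct $p,p'\in\mathbb{Z}^d$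 with $k$ the largest differing index, $p\prec p'$ iff ($k$ even, $p_k<p'_k$) or ($k$ odd, $p_k>p'_k$). Valuation: $\mathcal{V}_\sigma(\bot)=\text{\o}$, $\mathcal{V}_\sigma(s)=\min^\prec_\tau\max^\prec\{\wp(\pi)\mid\pi$ a play in $\mathcal{A}_\bot|_{\sigma,\tau}$ from $s\}$, min over player-$1$ strategies $\tau$. $\sigma$ is reasonable if $\mathcal{A}_\bot|_\sigma$ has no $1$-dominated cycle. *)

(* Defs.v *)
From mathcomp Require Import all_boot all_order all_algebra.
From Stdlib Require Import ClassicalEpsilon.
Set Implicit Arguments. Unset Strict Implicit. Unset Printing Implicit Defensive.
Import GRing.Theory Num.Theory Order.TTheory.

(* A parity game arena (V,E,o,c) with colours in {0,...,d-1}.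
   owner v = false : v belongs to player 0;  owner v = true : player 1. *)
Record arena (d : nat) := Arena {
  vert : finType;
  edge : rel vert;
  owner : vert -> bool;
  colour : vert -> 'I_d;
  edge_total : forall v, exists w, edge v w }.
Arguments vert {d} a.
Arguments edge {d} a _ _.
Arguments owner {d} a _.
Arguments colour {d} a _.

Inductive profile (d : nat) :=
  NegInf | Fin of {ffun 'I_d -> int} | PosInf.
Arguments NegInf {d}.
Arguments PosInf {d}.

Section Profiles.
Variable d : nat.
Local Open Scope ring_scope.

Definition fin_lt (p q : {ffun 'I_d -> int}) : Prop :=
  exists k : 'I_d, p k != q k /\ (forall j : 'I_d, (k < j)%N -> p j = q j) /\
    (if odd k then q k < p k else p k < q k).

Definition prof_lt (a b : profile d) : Prop :=
  match a, b with
  | NegInf, NegInf => False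
  | NegInf, _ => True
  | Fin _, NegInf => False
  | Fin p, Fin q => fin_lt p q
  | Fin _, PosInf => True
  | PosInf, _ => False
  end.

Definition prof_le (a b : profile d) : Prop := a = b \/ prof_lt a b.

(* maximum / minimum (w.r.t. the profile order) of a set of profiles;
   chosen classically; it is the max/min whenever one exists *)
Definition is_max (S : profile d -> Prop) (m : profile d) :=
  S m /\ forall q, S q -> prof_le q m.
Definition is_min (S : profile d -> Prop) (m : profile d) :=
  S m /\ forall q, S q -> prof_le m q.
Definition pmax (S : profile d -> Prop) : profile d :=
  epsilon (inhabits NegInf) (is_max S).
Definition pmin (S : profile d -> Prop) : profile d :=
  epsilon (inhabits NegInf) (is_min S).
End Profiles.

Section Escape.
Variables (d : nat) (A : arena d).
Local Notation V := (vert A).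
(* vertices of the escape arena: Some v for v in V, None for bottom *)
Local Notation VB := (option V).
Local Open Scope ring_scope.

Definition esc_edge (x y : VB) : bool :=
  match x, y with
  | Some u, Some v => edge A u v
  | Some u, None => ~~ owner A u
  | None, _ => false
  end.

Definition E0 : {set VB * VB} :=
  [set e | if e.1 is Some u then ~~ owner A u && esc_edge e.1 e.2 else false].
Definition E1 : {set VB * VB} :=
  [set e | match e with
           | (Some u, Some v) => owner A u && edge A u v
           | _ => false end].

Definition strategy0 (sigma : {set VB * VB}) : Prop :=
  sigma \subset E0 /\ forall u : V, ~~ owner A u -> exists y, (Some u, y) \in sigma.
Definition strategy1 (tau : {set VB * VB}) : Prop :=
  tau \subset E1 /\ forall u : V, owner A u -> exists y, (Some u, y) \in tau.

Definition rel_of (F : {set VB * VB}) : rel VB := fun x y => (x, y) \in F.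

Definition finite_play (F : {set VB * VB}) (s : VB) (p : seq VB) : Prop :=
  path (rel_of F) s p /\ forall y, ~~ rel_of F (last s p) y.
Definition infinite_play (F : {set VB * VB}) (s : VB) (f : nat -> VB) : Prop :=
  f 0%N = s /\ forall n, rel_of F (f n) (f n.+1).

Definition unitp (x : VB) : {ffun 'I_d -> int} :=
  if x is Some v then [ffun i => ((colour A v == i) : nat)%:Z] else 0.
Definition seq_profile (p : seq VB) : profile d := Fin (\sum_(x <- p) unitp x).

Definition inf_often (f : nat -> VB) (k : 'I_d) : Prop :=
  forall n, exists m, (n <= m)%N /\ exists v, f m = Some v /\ colour A v = k.
Definition won0 (f : nat -> VB) : Prop :=
  exists k : 'I_d, inf_often f k /\ ~~ odd k /\
    forall j : 'I_d, inf_often f j -> (j <= k)%N.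

Definition play_profiles (F : {set VB * VB}) (s : VB) (q : profile d) : Prop :=
  (exists p, finite_play F s p /\ q = seq_profile (s :: p)) \/
  (exists f, infinite_play F s f /\
     ((won0 f /\ q = PosInf) \/ (~ won0 f /\ q = NegInf))).

Definition valuation (sigma : {set VB * VB}) (x : VB) : profile d :=
  match x with
  | None => Fin 0
  | Some v => pmin (fun q => exists tau, strategy1 tau /\
                       q = pmax (play_profiles (sigma :|: tau) (Some v)))
  end.

Definition cycle_colour (c : seq VB) : nat :=
  \max_(x <- c) (if x is Some v then val (colour A v) else 0%N).

Definition reasonable (sigma : {set VB * VB}) : Prop :=
  forall c : seq VB, c != [::] -> cycle (rel_of (sigma :|: E1)) c ->
    ~~ odd (cycle_colour c).
End Escape.

(* Main.v *)
Require Import Defs.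
From mathcomp Require Import all_boot all_order all_algebra.
From Stdlib Require Import Classical ClassicalEpsilon.
Set Implicit Arguments. Unset Strict Implicit. Unset Printing Implicit Defensive.
Import GRing.Theory Num.Theory Order.TTheory.

Section Order.
Variable d : nat.
Local Open Scope ring_scope.

Lemma fin_lt_trans (p q r : {ffun 'I_d -> int}) :
  fin_lt p q -> fin_lt q r -> fin_lt p r.
Proof.
move=> [k1 [n1 [e1 c1]]] [k2 [n2 [e2 c2]]].
have [lt12|lt21|eq12] := ltngtP k1 k2.
- exists k2; split; first by rewrite (e1 _ lt12).
  split; first by move=> j hj; rewrite e1 ?e2 //; apply: ltn_trans hj.
  by rewrite (e1 _ lt12).
- exists k1; split; first by rewrite -(e2 _ lt21).
  split; first by move=> j hj; rewrite e1 ?e2 //; apply: ltn_trans hj.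
  by rewrite -(e2 _ lt21).
- have ek : k1 = k2 by apply: val_inj.
  subst k2; exists k1; split; last split.
  + by case: (odd k1) c1 c2 => h1 h2; [rewrite gt_eqF // (lt_trans h2 h1)|
       rewrite lt_eqF // (lt_trans h1 h2)].
  + by move=> j hj; rewrite e1 ?e2.
  + by case: (odd k1) c1 c2 => h1 h2; [exact: lt_trans h2 h1|exact: lt_trans h1 h2].
Qed.

Lemma prof_le_trans (a b c : profile d) :
  prof_le a b -> prof_le b c -> prof_le a c.
Proof.
move=> [->|hab] [<-|hbc]; rewrite /prof_le; auto.
right; move: a b c hab hbc => [|p|] [|q|] [|r|] //=; exact: fin_lt_trans.
Qed.

Lemma fin_lt_total (p q : {ffun 'I_d -> int}) :
  p = q \/ fin_lt p q \/ fin_lt q p.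
Proof.
case: (boolP [exists k, p k != q k]) => [/existsP [i hi]|].
- pose k := [arg max_(k > i | p k != q k) val k].
  have : (p k != q k) /\ (forall j : 'I_d, (k < j)%N -> p j = q j).
    rewrite /k; case: arg_maxnP => //= m hm hmax; split => // j hj.
    apply/eqP; apply: contraTT hj => hne; rewrite -leqNgt; exact: hmax.
  move=> [hk he]; right.
  have [h|h] : p k < q k \/ q k < p k.
    by case: ltgtP hk => //; auto.
  + case ok: (odd k).
    * by right; exists k; rewrite eq_sym ok; split=> //; split=> // j hj; rewrite he.
    * by left; exists k; rewrite ok.
  + case ok: (odd k).
    * by left; exists k; rewrite ok.
    * by right; exists k; rewrite eq_sym ok; split=> //; split=> // j hj; rewrite he.
- move=> hn; left; apply/ffunP => k; apply/eqP; apply: contraNT hn => hk.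
  by apply/existsP; exists k.
Qed.

Lemma prof_le_total (a b : profile d) : prof_le a b \/ prof_le b a.
Proof.
rewrite /prof_le; move: a b => [|p|] [|q|] /=; try tauto.
case: (fin_lt_total p q) => [->|[]]; tauto.
Qed.

Lemma prof_le_PosInf (a : profile d) : prof_le a PosInf.
Proof. by rewrite /prof_le; case: a => [|p|] /=; auto. Qed.

Lemma list_max (T : eqType) (L : seq T) (P : T -> Prop) (g : T -> profile d) :
  (exists x, x \in L /\ P x) ->
  exists x, x \in L /\ P x /\ forall y, y \in L -> P y -> prof_le (g y) (g x).
Proof.
elim: L => [|a L IH] [x [hx px]] //.
case: (classic (exists x, x \in L /\ P x)) => [/IH [m [hm [pm mm]]]|hno].
- case: (classic (P a)) => pa.
  + case: (prof_le_total (g a) (g m)) => h.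
    * exists m; rewrite inE hm orbT; do 2!split=> //.
      by move=> y; rewrite inE => /orP [/eqP ->|/mm] //.
    * exists a; rewrite inE eqxx; do 2!split=> //.
      move=> y; rewrite inE => /orP [/eqP ->|hy py]; first by left.
      exact: prof_le_trans (mm _ hy py) h.
  + exists m; rewrite inE hm orbT; do 2!split=> //.
    by move=> y; rewrite inE => /orP [/eqP ->|/mm].
- have ea : x = a.
    move: hx; rewrite inE => /orP [/eqP //|hx]; by case: hno; exists x.
  subst x; exists a; rewrite inE eqxx; do 2!split=> //.
  move=> y; rewrite inE => /orP [/eqP ->|hy py]; first by left.
  by case: hno; exists y.
Qed.

Lemma list_min (T : eqType) (L : seq T) (P : T -> Prop) (g : T -> profile d) :
  (exists x, x \in L /\ P x) ->
  exists x, x \in L /\ P x /\ forall y, y \in L -> P y -> prof_le (g x) (g y).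
Proof.
elim: L => [|a L IH] [x [hx px]] //.
case: (classic (exists x, x \in L /\ P x)) => [/IH [m [hm [pm mm]]]|hno].
- case: (classic (P a)) => pa.
  + case: (prof_le_total (g a) (g m)) => h.
    * exists a; rewrite inE eqxx; do 2!split=> //.
      move=> y; rewrite inE => /orP [/eqP ->|hy py]; first by left.
      exact: prof_le_trans h (mm _ hy py).
    * exists m; rewrite inE hm orbT; do 2!split=> //.
      by move=> y; rewrite inE => /orP [/eqP ->|/mm] //.
  + exists m; rewrite inE hm orbT; do 2!split=> //.
    by move=> y; rewrite inE => /orP [/eqP ->|/mm].
- have ea : x = a.
    move: hx; rewrite inE => /orP [/eqP //|hx]; by case: hno; exists x.
  subst x; exists a; rewrite inE eqxx; do 2!split=> //.
  move=> y; rewrite inE => /orP [/eqP ->|hy py]; first by left.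
  by case: hno; exists y.
Qed.

Lemma pmax_spec (S : profile d -> Prop) m : is_max S m -> is_max S (pmax S).
Proof. by move=> h; rewrite /pmax; apply: epsilon_spec; exists m. Qed.
Lemma pmin_spec (S : profile d -> Prop) m : is_min S m -> is_min S (pmin S).
Proof. by move=> h; rewrite /pmin; apply: epsilon_spec; exists m. Qed.
End Order.

Section Lasso.
Variables (d : nat) (A : arena d) (F : {set option (vert A) * option (vert A)}).
Local Notation VB := (option (vert A)).
Local Notation r := (rel_of F).

Definition lasso (s : VB) := exists x p1 c,
  path r s p1 /\ last s p1 = x /\ path r x c /\ r (last x c) x.

Lemma lasso_nonuniq s p : path r s p -> ~~ uniq (s :: p) -> lasso s.
Proof.
elim: p s => [|y p IH] s //=.
move=> /andP [rsy py]; case: (boolP (s \in y :: p)) => [hs _|hs /= hu].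
- move: rsy py hs => rsy py hs.
  have hp : path r s (y :: p) by rewrite /= rsy.
  move: hp; case/splitPr: hs => p1 p2; rewrite cat_path => /andP [hp1 /= /andP [hl _]].
  by exists s, [::], p1.
- have [x [q [c [h1 [h2 [h3 h4]]]]]] := IH y py hu.
  by exists x, (y :: q), c; rewrite /= rsy h1.
Qed.

Lemma path_iota (f : nat -> VB) m n :
  (forall i, i < m + n -> r (f i) (f i.+1)) ->
  path r (f m) [seq f i | i <- iota m.+1 n].
Proof.
elim: n m => [|n IH] m h //=.
rewrite h ?addnS ?ltnS ?leq_addr //; apply: IH => i hi; apply: h.
by rewrite addnS -addSn.
Qed.

Lemma last_iota (f : nat -> VB) m n :
  last (f m) [seq f i | i <- iota m.+1 n] = f (m + n).
Proof. by elim: n m => [|n IH] m /=; rewrite ?addn0 // IH addnS. Qed.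

Lemma lasso_inf s f : infinite_play F s f -> lasso s.
Proof.
move=> [f0 hf]; have := @lasso_nonuniq s [seq f i | i <- iota 1 #|{: VB}|]; apply.
  by rewrite -f0; apply: path_iota.
apply/negP => hu.
have := max_card (mem (s :: [seq f i | i <- iota 1 #|{: VB}|])).
by rewrite (card_uniqP hu) /= size_map size_iota ltnn.
Qed.

Definition cv (x : VB) : nat := if x is Some v then val (colour A v) else 0.

Lemma max_attained (a : VB) l : exists y, y \in a :: l /\
  \max_(z <- a :: l) cv z = cv y.
Proof.
elim: l a => [|b l IH] a.
  by exists a; rewrite big_cons big_nil maxn0 mem_head.
have [y [hy e]] := IH b; rewrite big_cons e.
case: (leqP (cv a) (cv y)) => h.
- by exists y; rewrite inE hy orbT.
- by exists a; rewrite mem_head.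
Qed.

Lemma lasso_won s :
  (forall y, ~~ r None y) ->
  (forall c : seq VB, c != [::] -> cycle r c -> ~~ odd (cycle_colour c)) ->
  lasso s -> play_profiles F s PosInf.
Proof.
move=> H1 H2 [x [p1 [c [hp1 [hl [hc hcl]]]]]].
set L := (size c).+1.
set cyc := x :: c.
have L0 : 0 < L by [].
have cyc_edge : forall k, k < L -> r (nth x cyc k) (nth x cyc (k.+1 %% L)).
  move=> k hk.
  have hpc : path r x (rcons c x) by rewrite rcons_path hc hcl.
  have := (pathP x hpc) k; rewrite size_rcons => /(_ hk).
  rewrite -rcons_cons nth_rcons /= -/L hk nth_rcons.
  case: (ltnP k (size c)) => hk2.
    by rewrite modn_small.
  have ek : k = size c by apply/eqP; rewrite eqn_leq hk2 -ltnS hk.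
  by rewrite ek eqxx /L modnn.
pose g n := if n < size p1 then nth s (s :: p1) n
            else nth x cyc ((n - size p1) %% L).
have hg : infinite_play F s g.
  split.
    rewrite /g; case: ltnP => //=; rewrite leqn0 => /nilP e.
    by move: hl; rewrite e /= => <-.
  move=> n; rewrite /g.
  case: (ltnP n.+1 (size p1)) => h1.
    rewrite (ltnW h1); have := (pathP s hp1) n (ltnW h1); by [].
  case: (ltnP n (size p1)) => h2.
    have e : n.+1 = size p1 by apply/eqP; rewrite eqn_leq h1 h2.
    rewrite e subnn mod0n /=.
    have := (pathP s hp1) n h2; rewrite -hl -nth_last -e /=.
    by [].
  rewrite subSn // -addn1 -modnDml addn1; apply: cyc_edge.
  exact: ltn_pmod.
have cyc_some : forall y, y \in cyc -> exists v, y = Some v.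
  move=> y hy; have hk : index y cyc < L by rewrite index_mem.
  have := cyc_edge _ hk; rewrite nth_index //.
  by case: y {hy hk} => [v|] h; [exists v| move: (H1 (nth x cyc ((index None cyc).+1 %% L))); rewrite h].
have [y0 [hy0 ey0]] := max_attained x c.
have [v0 ev0] := cyc_some _ hy0; subst y0.
have hodd : ~~ odd (colour A v0).
  by have := H2 cyc isT; rewrite /cycle_colour ey0 /=; apply; rewrite /= rcons_path hc hcl.
right; exists g; split=> //; left; split=> //.
exists (colour A v0); split; [|split=> //].
- move=> n; set i0 := index (Some v0) cyc.
  have hi0 : i0 < L by rewrite index_mem.
  exists (size p1 + (n * L + i0)); split.
    apply: (leq_trans _ (leq_addl (size p1) _)); apply: (leq_trans _ (leq_addr i0 _)).
    by rewrite leq_pmulr.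
  exists v0; split=> //; rewrite /g ltnNge leq_addr /= addKn modnMDl modn_small //.
  by rewrite nth_index.
- move=> j /(_ (size p1)) [m [hm [v [egv ev]]]].
  move: egv; rewrite /g ltnNge hm /= => egv.
  have hv : Some v \in cyc by rewrite -egv mem_nth // ltn_pmod.
  have := @leq_bigmax_seq _ cyc predT cv (Some v) hv isT.
  by rewrite /cycle_colour in ey0; rewrite -/cv ey0 /= ev.
Qed.
End Lasso.

Section Max.
Variables (d : nat) (A : arena d) (F : {set option (vert A) * option (vert A)}).
Local Notation VB := (option (vert A)).
Local Notation r := (rel_of F).

Fixpoint allseqs (n : nat) : seq (seq VB) :=
  if n is n'.+1 then [::] :: [seq x :: p | x <- enum {: VB}, p <- allseqs n']
  else [:: [::]].

Lemma allseqsP n (p : seq VB) : size p <= n -> p \in allseqs n.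
Proof.
elim: n p => [|n IH] [|x p] //= h; rewrite ?mem_head //.
rewrite inE; apply/orP; right; apply: (allpairs_f (fun x p => x :: p)).
  by rewrite mem_enum.
exact: IH.
Qed.

Lemma play_exists s :
  (forall f, ~ infinite_play F s f) -> exists p, finite_play F s p.
Proof.
move=> hinf.
pose nxt (x : VB) := odflt x [pick y | r x y].
pose f n := iter n nxt s.
pose P := fun n => [forall y, ~~ r (f n) y].
have step : forall i, ~~ P i -> r (f i) (f i.+1).
  move=> i; rewrite /P negb_forall => /existsP [y hy].
  rewrite /f iterS /nxt; case: pickP => [z hz //|hn].
  by move: hy; rewrite (hn y).
case: (classic (exists n, P n)) => [hex|hno].
- have [n0 dn0 min0] := find_ex_minn hex.
  exists [seq f i | i <- iota 1 n0]; split.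
    apply: (path_iota (m := 0)) => i hi; apply: step.
    by apply/negP => /min0; rewrite leqNgt hi.
  by move=> y; rewrite (last_iota f 0) add0n; move: dn0 => /forallP.
- exfalso; apply: (hinf f); split=> // n; apply: step.
  by apply/negP => hn; apply: hno; exists n.
Qed.

Lemma max_exists s :
  (forall y, ~~ r None y) ->
  (forall c : seq VB, c != [::] -> cycle r c -> ~~ odd (cycle_colour c)) ->
  exists m, is_max (play_profiles F s) m.
Proof.
move=> H1 H2.
case: (classic (lasso F s)) => [hl|hnl].
  exists PosInf; split; first exact: lasso_won.
  by move=> q _; apply: prof_le_PosInf.
have hinf : forall f, ~ infinite_play F s f.
  by move=> f /lasso_inf.
have huniq : forall p, finite_play F s p -> uniq (s :: p).
  move=> p [hp _]; apply/negPn/negP => hn; exact: hnl (lasso_nonuniq hp hn).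
have hin : forall p, finite_play F s p -> p \in allseqs #|{: VB}|.
  move=> p /huniq hu; apply: allseqsP.
  have := max_card (mem (s :: p)); rewrite (card_uniqP hu) /=.
  exact: ltnW.
have [p0 hp0] := play_exists hinf.
have [x [hx [px mx]]] := @list_max d _ (allseqs #|{: VB}|) (finite_play F s)
   (fun p => seq_profile (s :: p)) (ex_intro _ p0 (conj (hin _ hp0) hp0)).
exists (seq_profile (s :: x)); split; first by left; exists x.
move=> q [[p [hp ->]]|[f [hf _]]]; last by case: (hinf f).
exact: mx (hin _ hp) hp.
Qed.
End Max.

Section Main.
Variables (d : nat) (A : arena d).
Local Notation VB := (option (vert A)).

Lemma noedge_None (sx tau : {set VB * VB}) :
  sx \subset E0 A -> tau \subset E1 A -> forall y, ~~ rel_of (sx :|: tau) None y.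
Proof.
move=> h0 h1 y; rewrite /rel_of inE; apply/negP => /orP [/(subsetP h0)|/(subsetP h1)];
  by rewrite inE.
Qed.

Lemma cyc_ok (sx tau : {set VB * VB}) :
  reasonable sx -> tau \subset E1 A ->
  forall c : seq VB, c != [::] -> cycle (rel_of (sx :|: tau)) c -> ~~ odd (cycle_colour c).
Proof.
move=> hr h1 c hc hcyc; apply: hr hc _; apply: sub_cycle hcyc => x y.
rewrite /rel_of !in_setU => /orP [->//|/(subsetP h1) ->]; by rewrite orbT.
Qed.

Lemma succ_Some (sx tau : {set VB * VB}) :
  strategy0 sx -> strategy1 tau -> forall u : vert A, exists y, rel_of (sx :|: tau) (Some u) y.
Proof.
move=> [_ h0] [_ h1] u; case ou: (owner A u).
- by have [y hy] := h1 u ou; exists y; rewrite /rel_of inE hy orbT.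
- by have [y hy] := h0 u (negbT ou); exists y; rewrite /rel_of inE hy.
Qed.

Lemma profiles_sub (sa sb tau : {set VB * VB}) s :
  strategy0 sa -> strategy0 sb -> strategy1 tau -> sa \subset sb ->
  forall q, play_profiles (sa :|: tau) s q -> play_profiles (sb :|: tau) s q.
Proof.
move=> ha hb ht hab.
have sr : subrel (rel_of (sa :|: tau)) (rel_of (sb :|: tau)).
  move=> x y; rewrite /rel_of !inE => /orP [/(subsetP hab) ->//|->]; by rewrite orbT.
move=> q [[p [[hp hl] ->]]|[f [[f0 hf] hw]]].
- left; exists p; split=> //; split; first exact: sub_path hp.
  case el: (last s p) => [u|]; last first.
    by apply: noedge_None; [case: hb|case: ht].
  by have [y hy] := succ_Some ha ht u; move: (hl y); rewrite el hy.
- by right; exists f; split=> //; split=> // n; apply: sr.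
Qed.

Lemma tau_exists : exists tau : {set VB * VB}, strategy1 tau.
Proof.
pose succ (u : vert A) := odflt u [pick w | edge A u w].
have hs : forall u, edge A u (succ u).
  move=> u; rewrite /succ; case: pickP => [w //|hn].
  by have [w hw] := edge_total u; move: (hn w); rewrite hw.
exists [set e : VB * VB | match e with
                          | (Some u, Some w) => owner A u && (w == succ u)
                          | _ => false end]; split.
- apply/subsetP => [[[u|] [w|]]]; rewrite !inE //= => /andP [-> /eqP ->].
  exact: hs.
- by move=> u ou; exists (Some (succ u)); rewrite inE ou eqxx.
Qed.

Lemma min_exists (sx : {set VB * VB}) v :
  strategy0 sx -> reasonable sx ->
  exists m, is_min (fun q => exists tau, strategy1 tau /\
                       q = pmax (play_profiles (sx :|: tau) (Some v))) m.
Proof.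
move=> h0 hr.
have [t0 ht0] := tau_exists.
have [x [_ [px mx]]] := @list_min d _ (enum {: {set VB * VB}}) (@strategy1 d A)
   (fun tau => pmax (play_profiles (sx :|: tau) (Some v)))
   (ex_intro _ t0 (conj (mem_enum _ _) ht0)).
exists (pmax (play_profiles (sx :|: x) (Some v))); split; first by exists x.
by move=> q [tau [ht ->]]; apply: mx => //; rewrite mem_enum.
Qed.

Lemma pmax_is_max (sx tau : {set VB * VB}) s :
  strategy0 sx -> reasonable sx -> strategy1 tau ->
  is_max (play_profiles (sx :|: tau) s) (pmax (play_profiles (sx :|: tau) s)).
Proof.
move=> h0 hr ht.
have [m hm] := max_exists s (noedge_None (proj1 h0) (proj1 ht)) (cyc_ok hr (proj1 ht)).
exact: pmax_spec hm.
Qed.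
End Main.

Theorem mainTheorem12 (d : nat) (A : arena d)
  (sa sb : {set option (vert A) * option (vert A)}) :
  strategy0 sa -> strategy0 sb -> reasonable sa -> reasonable sb ->
  sa \subset sb ->
  forall s : option (vert A), prof_le (valuation sa s) (valuation sb s).
Proof.
move=> ha hb ra rb hab [v|]; last by left.
rewrite /valuation.
have [ma hma] := min_exists v ha ra.
have [mb hmb] := min_exists v hb rb.
have [[tb [htb eb]] mb_min] := pmin_spec hmb.
have [_ ma_min] := pmin_spec hma.
rewrite eb.
apply: prof_le_trans (ma_min _ (ex_intro _ tb (conj htb erefl))) _.
have [ina _] := pmax_is_max (Some v) ha ra htb.
have [_ mxb] := pmax_is_max (Some v) hb rb htb.
apply: mxb; exact: profiles_sub ha hb htb hab _ ina.
Qed.
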